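(* For every integer $\Delta\geq 1$, the symmetric directed star $\overleftrightarrow{K_{1,\Delta}}$ satisfies $$\chi'_{D_{1,2}}(\overleftrightarrow{K_{1,\Delta}}) = \left\lceil 2\sqrt{\Delta}\right\rceil.$$
   Context: For a simple graph $G$, the symmetric digraph $\overleftrightarrow{G}$ is obtained by replacing each edge $uv$ of $G$ by the pair of opposite arcs $\overrightarrow{uv}$ and $\overrightarrow{vu}$. An arc-colouring is proper of type I if any two consecutive arcs $\overrightarrow{uv},\overrightarrow{vw}$ (including $w=u$) receive distinct colours, i.e. no monochromatic 2-cycles and no monochromatic 2-paths. An arc-colouring is distinguishing if the only automorphism of $\overleftrightarrow{G}$ preserving the colour of every arc is the identity. $\chi'_{D_{1,2}}(\overleftrightarrow{G})$ is the least number of colours in a distinguishing proper arc-colouring of type I of $\overleftrightarrow{G}$. *)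

(* Defs.v *)
From mathcomp Require Import all_boot all_order all_algebra all_fingroup.
From mathcomp Require Import reals.
Set Implicit Arguments. Unset Strict Implicit. Unset Printing Implicit Defensive.

(* A simple graph on a finite vertex type V is a symmetric irreflexive
   relation e.  Its symmetric digraph has arc set {(u,v) | e u v}. *)
Definition simple_graph (V : finType) (e : rel V) : Prop :=
  (forall x, ~~ e x x) /\ (forall x y, e x y = e y x).

Definition arc (V : finType) (e : rel V) (u v : V) : bool := e u v.

(* An arc-colouring with k colours (only values on arcs matter). *)
Definition arc_colouring (V : finType) (k : nat) := V -> V -> 'I_k.

(* Proper of type I: consecutive arcs uv, vw (w = u allowed) get distinct
   colours. *)
Definition proper_typeI (V : finType) (e : rel V) k (c : arc_colouring V k) :=
  forall u v w, arc e u v -> arc e v w -> c u v != c v w.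

Definition digraph_aut (V : finType) (e : rel V) (s : {perm V}) :=
  forall u v, arc e (s u) (s v) = arc e u v.

Definition distinguishing (V : finType) (e : rel V) k (c : arc_colouring V k) :=
  forall s : {perm V}, digraph_aut e s ->
    (forall u v, arc e u v -> c (s u) (s v) = c u v) -> s = 1%g.

Definition has_DPI_colouring (V : finType) (e : rel V) (k : nat) :=
  exists c : arc_colouring V k, proper_typeI e c /\ distinguishing e c.

Definition is_chiD12 (V : finType) (e : rel V) (n : nat) :=
  has_DPI_colouring e n /\ forall k, k < n -> ~ has_DPI_colouring e k.

(* The star K_{1,Delta}: vertex set 'I_Delta.+1, centre ord0, edges
   between the centre and each other vertex. *)
Definition star_rel (D : nat) : rel 'I_D.+1 :=
  fun x y => ((x == ord0) && (y != ord0)) || ((y == ord0) && (x != ord0)).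
Arguments star_rel D x y : clear implicits.

(* Main.v *)
Require Import Defs.
From mathcomp Require Import all_boot all_order all_algebra all_fingroup.
From mathcomp Require Import reals.
From mathcomp Require Import zify.
Import Order.TTheory GRing.Theory Num.Theory.

Lemma real_part (R : realType) (D : nat) :
  let n := `|Num.ceil (2 * Num.sqrt (D%:R : R))%R|%N in
  (4 * D <= n * n)%N /\ (forall k, (k < n)%N -> (k * k < 4 * D)%N).
Proof.
move=> n.
set x := (2 * Num.sqrt (D%:R : R))%R.
have x0 : (0 <= x)%R by rewrite mulr_ge0 ?sqrtr_ge0.
have xx : (x * x = (4 * D)%:R)%R.
  rewrite /x mulrACA -expr2 -[(Num.sqrt _ * _)%R]expr2 sqr_sqrtr ?ler0n // natrM.
  by rewrite expr2 -!natrM.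
have zn : Num.ceil x = Posz n.
  by rewrite /n gez0_abs // ceil_ge0 (lt_le_trans _ x0) // ltrN10.
split.
  have := ceil_ge x; rewrite zn => h.
  have := ler_pM x0 x0 h h; rewrite xx -natrM ler_nat //.
move=> k kn.
have : (k%:R < x)%R.
  rewrite ltNge; apply/negP => h.
  have : (Num.ceil x <= Posz k)%R by rewrite ceil_le_int.
  by rewrite zn lez_nat leqNgt kn.
move=> h.
have := ltr_pM (ler0n _ k) (ler0n _ k) h h; rewrite xx -natrM ltr_nat //.
Qed.

Lemma lift0_neq D (m : 'I_D) : (lift ord0 m == ord0 :> 'I_D.+1) = false.
Proof. by rewrite eq_sym (negbTE (neq_lift _ _)). Qed.

Lemma lower D k : has_DPI_colouring (star_rel D) k ->
  exists a b, (a + b <= k)%N /\ (D <= a * b)%N.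
Proof.
case=> c [pr di].
pose l (m : 'I_D) : 'I_D.+1 := lift ord0 m.
pose A := [set c ord0 (l m) | m : 'I_D].
pose B := [set c (l m) ord0 | m : 'I_D].
pose G := [set (c ord0 (l m), c (l m) ord0) | m : 'I_D].
exists #|A|, #|B|; split.
  have disj : A :&: B = set0.
    apply/setP=> y; rewrite !inE; apply/negbTE/negP.
    move=> /andP[/imsetP[m1 _ ->] /imsetP[m2 _ e]].
    have := pr (l m2) ord0 (l m1).
    by rewrite /Defs.arc /star_rel /l /= -e eqxx => /(_ isT isT).
  have := cardsU A B; rewrite disj cards0 subn0 => <-.
  by have := max_card (A :|: B); rewrite card_ord.
have cardG : #|G| = D.
  rewrite card_imset ?card_ord // => m1 m2 [e1 e2].
  apply/eqP; apply/negP => /negP ne.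
  pose u := l m1; pose v := l m2.
  have uv : u != v by rewrite /u /v (inj_eq (@lift_inj _ ord0)).
  pose s := tperm u v.
  have so0 : s ord0 = ord0 by rewrite tpermD // eq_sym /u /v /l lift0_neq.
  have hs : forall x, (s x == ord0) = (x == ord0).
    by move=> x; rewrite -{1}so0 (inj_eq perm_inj).
  have aut : digraph_aut (star_rel D) s.
    by move=> x y; rewrite /Defs.arc /star_rel !hs.
  have col : forall x y, Defs.arc (star_rel D) x y -> c (s x) (s y) = c x y.
    move=> x y; rewrite /Defs.arc /star_rel.
    case/orP => [/andP[/eqP-> _] | /andP[/eqP-> _]]; rewrite so0.
      by case: tpermP => [->|->|//]; rewrite ?e1.
    by case: tpermP => [->|->|//]; rewrite ?e2.
  have := congr1 (fun p : {perm _} => p u) (di s aut col).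
  by rewrite tpermL perm1 => /eqP; rewrite eq_sym (negbTE uv).
have sub : G \subset setX A B.
  apply/subsetP => q /imsetP[m _ ->]; rewrite in_setX.
  by apply/andP; split; apply/imsetP; exists m.
by have := subset_leq_card sub; rewrite cardsX cardG.
Qed.

Lemma upper D n p : (0 < D)%N -> (0 < p)%N -> (D <= p * (n - p))%N ->
  has_DPI_colouring (star_rel D) n.
Proof.
move=> D0 p0 hD.
case: n hD => [|n'] hD; first by rewrite sub0n muln0 in hD; lia.
have pn : (p < n'.+1)%N.
  rewrite ltnNge; apply/negP => h.
  by move: hD; rewrite (eqnP h) muln0; lia.
pose c : arc_colouring _ n'.+1 := fun u v : 'I_D.+1 =>
  if u == ord0 then inord ((v : nat).-1 %% p) else inord (p + (u : nat).-1 %/ p).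
have cA : forall v : 'I_D.+1, val (c ord0 v) = (v : nat).-1 %% p.
  move=> v; rewrite /c eqxx; apply: inordK.
  by apply: (ltn_trans (ltn_pmod _ p0)).
have ltA : forall v : 'I_D.+1, (val (c ord0 v) < p)%N by move=> v; rewrite cA ltn_pmod.
have cB : forall u v : 'I_D.+1, u != ord0 -> val (c u v) = p + (u : nat).-1 %/ p.
  move=> u v /negbTE u0; rewrite /c u0; apply: inordK.
  have : ((u : nat).-1 %/ p < n'.+1 - p)%N.
    rewrite ltn_divLR // mulnC.
    have := ltn_ord u; move: hD; set t := (p * _)%N; lia.
  lia.
have geB : forall u v : 'I_D.+1, u != ord0 -> (p <= val (c u v))%N.
  by move=> u v u0; rewrite cB // leq_addr.
exists c; split.
  move=> u v w; rewrite /Defs.arc /star_rel.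
  case: (eqVneq u ord0) => [->|u0] /=.
    rewrite andbF orbF => v0.
    rewrite (negbTE v0) /= andbT => /eqP ->.
    apply/negP => /eqP /(congr1 val) e.
    by have := ltA v; have := geB v ord0 v0; rewrite e => h; rewrite ltnNge h.
  rewrite andbT => /eqP -> /=; rewrite andbF orbF => w0.
  apply/negP => /eqP /(congr1 val) e.
  by have := ltA w; have := geB u ord0 u0; rewrite e => h; rewrite ltnNge h.
move=> s aut col.
pose lj : 'I_D.+1 := lift ord0 (Ordinal D0).
have lj0 : lj != ord0 by rewrite /lj lift0_neq.
have s0 : s ord0 = ord0.
  case: (eqVneq (s ord0) ord0) => // ne.
  have a0 : Defs.arc (star_rel D) ord0 lj by rewrite /Defs.arc /star_rel eqxx lj0.
  have := aut ord0 lj; rewrite a0 /Defs.arc /star_rel (negbTE ne) /= andbT => /eqP sl.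
  have := col _ _ a0; rewrite sl => /(congr1 val) e.
  by have := ltA lj; have := geB _ ord0 ne; rewrite e; lia.
apply/permP => x; rewrite perm1.
case: (eqVneq x ord0) => [->//|x0].
have sx0 : s x != ord0 by rewrite -{1}s0 (inj_eq perm_inj).
have a1 : Defs.arc (star_rel D) ord0 x by rewrite /Defs.arc /star_rel eqxx x0.
have a2 : Defs.arc (star_rel D) x ord0 by rewrite /Defs.arc /star_rel eqxx x0 orbT.
have := col _ _ a1; rewrite s0 => /(congr1 val); rewrite !cA => e1.
have := col _ _ a2; rewrite s0 => /(congr1 val); rewrite !cB // => /addnI e2.
apply: val_inj => /=.
have h : ((s x : nat).-1 = (x : nat).-1)%N.
  by rewrite (divn_eq (s x : nat).-1 p) (divn_eq (x : nat).-1 p) e1 e2.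
have hx : (0 < (x : nat))%N by rewrite lt0n.
have hsx : (0 < (s x : nat))%N by rewrite lt0n.
lia.
Qed.

Theorem proposition2p4 (R : realType) (D : nat) : (1 <= D)%N ->
  is_chiD12 (star_rel D) `|Num.ceil (2 * Num.sqrt (D%:R : R))%R|%N.
Proof.
move=> D1; have [h1 h2] := real_part R D.
set n := `|_|%N in h1 h2 *.
split.
  apply: (@upper D n (n %/ 2)) => //.
    have : (2 <= n)%N by nia.
    lia.
  have := divn_eq n 2; have := ltn_pmod n (isT : (0 < 2)%N).
  set q := n %/ 2; set r := n %% 2 => rl nE.
  nia.
move=> k kn hk; have [a [b [ab Dab]]] := lower _ _ hk.
have := h2 k kn.
have h3 : ((a + b) * (a + b) <= k * k)%N by apply: leq_mul.
have h4 : (4 * (a * b) <= (a + b) * (a + b))%N.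
  case: (leqP a b) => hab.
    have [d ->] : exists d, b = a + d by exists (b - a); lia.
    nia.
  have [d ->] : exists d, a = b + d by exists (a - b); lia.
  nia.
move: h3 h4 Dab; set t := (a * b)%N; set u := ((a + b) * (a + b))%N; set w := (k * k)%N.
lia.
Qed.
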